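(* Let $V$ be a unit intensity Poisson process on $\mathbb{R}^2$ and $R,\alpha>0$. The probability that $Q(0,R)=[-R,R]^2$ is not $\alpha$-sealed is at most $\lceil 8R/\alpha\rceil e^{-\pi\alpha^2/4}$.
   Context: A set $S\subset\mathbb{R}^2$ is $\alpha$-sealed w.r.t. $V$ if $d(x,V)\le\alpha$ for every $x\in\partial S$. *)

(* Defs.v *)
From HB Require Import structures.
From mathcomp Require Import all_boot all_order all_algebra.
From mathcomp Require Import all_classical all_reals all_analysis.
From mathcomp Require Import finmap.
Set Implicit Arguments. Unset Strict Implicit. Unset Printing Implicit Defensive.
Import Order.TTheory GRing.Theory Num.Theory.
Import numFieldNormedType.Exports.
Local Open Scope classical_set_scope.
Local Open Scope ring_scope.

Section Defs.
Context {R : realType}.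

Definition leb2 : set (R * R) -> \bar R :=
  (@lebesgue_measure R \x @lebesgue_measure R)%E.

Definition edist (x y : R * R) : R :=
  Num.sqrt ((x.1 - y.1) ^+ 2 + (x.2 - y.2) ^+ 2).

(* d(x,V) = inf_{v in V} |x - v|  (+oo if V is empty) *)
Definition dist_set (x : R * R) (V : set (R * R)) : \bar R :=
  ereal_inf [set (edist x v)%:E | v in V].

Definition bdry (S : set (R * R)) : set (R * R) := closure S `\` interior S.

Definition sealed (alpha : R) (S V : set (R * R)) : Prop :=
  forall x, bdry S x -> (dist_set x V <= alpha%:E)%E.

Definition square (r : R) : set (R * R) :=
  [set x | `|x.1| <= r /\ `|x.2| <= r].

Definition bounded2 (B : set (R * R)) : Prop :=
  exists M : R, B `<=` square M.

Definition borel2 (B : set (R * R)) : Prop :=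
  measurable (B : set (measurableTypeR R * measurableTypeR R)%type).

(* number of points of V in B (meaningful when V `&` B is finite) *)
Definition count (V : set (R * R)) (B : set (R * R)) : nat :=
  #|` fset_set (V `&` B)|%fset.

Definition poisson_process {d : measure_display} {Omega : measurableType d}
  (P : probability Omega R) (V : Omega -> set (R * R)) : Prop :=
  [/\
      (forall w B, bounded2 B -> finite_set (V w `&` B)),
      (forall B, borel2 B -> bounded2 B -> forall k : nat,
         measurable [set w | count (V w) B = k] /\
         P [set w | count (V w) B = k] =
           (expR (- fine (leb2 B)) * fine (leb2 B) ^+ k / (k`!)%:R)%:E) &
      (forall (n : nat) (B : 'I_n -> set (R * R)) (k : 'I_n -> nat),
         (forall i, borel2 (B i) /\ bounded2 (B i)) ->
         (forall i j, i != j -> B i `&` B j = set0) ->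
         P (\bigcap_(i in [set: 'I_n]) [set w | count (V w) (B i) = k i]) =
           (\prod_(i < n) P [set w | count (V w) (B i) = k i])%E)].

End Defs.

(* Main.v *)
Require Import Defs.
From HB Require Import structures.
From mathcomp Require Import all_boot all_order all_algebra.
From mathcomp Require Import all_classical all_reals all_analysis.
From mathcomp Require Import finmap ring lra zify.
Import Order.TTheory GRing.Theory Num.Theory.
Import numFieldNormedType.Exports.
Local Open Scope classical_set_scope.
Local Open Scope ring_scope.

Section PiBound.
Context {R : realType}.
Lemma cc_eq (x : R) n : cos_coeff' x n = (-1) ^+ n * x ^+ n.*2 / (n.*2)`!%:R.
Proof. by rewrite /cos_coeff' -exprnP. Qed.

Lemma pair_pos (c : R) n : 0 < c -> odd n -> c ^+ 2 < (n.*2.+2)%:R * (n.*2.+1)%:R ->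
  0 < - cos_coeff' c n + - cos_coeff' c n.+1.
Proof.
move=> c0 nodd hn; rewrite !cc_eq.
rewrite exprS -signr_odd nodd expr1 !mulN1r !opprK.
have -> : (n.+1).*2 = (n.*2).+2 by rewrite doubleS.
rewrite !factS exprS exprS.
set F := (n.*2)`!%:R.
have F0 : 0 < F :> R by rewrite /F ltr0n fact_gt0.
set X := c ^+ n.*2.
rewrite !natrM -/F.
have X0 : 0 < X by rewrite /X exprn_gt0.
set A : R := (n.*2.+2)%:R. set B : R := (n.*2.+1)%:R.
have A0 : 0 < A by rewrite /A ltr0n.
have B0 : 0 < B by rewrite /B ltr0n.
have -> : - (- X / F) - 1 * (c * (c * X)) / (A * (B * F)) =
   X / (A * (B * F)) * (A * B - c ^+ 2).
  by field; rewrite !gt_eqF.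
apply: mulr_gt0; first by rewrite divr_gt0 // !mulr_gt0.
by rewrite subr_gt0.
Qed.

Lemma cos_ub4 (c : R) : 0 < c -> c ^+ 2 < 42%:R ->
  cos c < 1 - c ^+ 2 / 2 + c ^+ 4 / 24%:R.
Proof.
move=> c0 c2.
have h := cvgN (@cvg_cos_coeff' R c); rewrite -seriesN in h.
set f := (X in series X) in h.
have {}h : series f @ \oo --> - cos c by apply: h.
have key : \sum_(0 <= i < 3) f i < limn (series f).
  apply: lt_sum_lim_series; first exact: (filter.cvgP _ h).
  move=> d; rewrite /f addnS; apply: pair_pos => //.
    by rewrite oddD odd_double.
  apply: lt_le_trans c2 _; rewrite -natrM ler_nat.
  rewrite !doubleD; nia.
rewrite (cvg_lim (@Rhausdorff R) h) in key.
move: key; rewrite !big_nat_recr //= big_nil /f.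
have e0 : cos_coeff' c 0 = 1 by rewrite cc_eq expr0 mul1r expr0 divr1.
have e1 : cos_coeff' c 1 = - (c ^+ 2 / 2).
  by rewrite cc_eq expr1 mulN1r mulNr.
have e2 : cos_coeff' c 2 = c ^+ 4 / 24%:R.
  by rewrite cc_eq sqrrN expr1n mul1r.
move=> key.
have : 0 - cos_coeff' c 0 - cos_coeff' c 1 - cos_coeff' c 2 < - cos c by exact: key.
rewrite e0 e1 e2; lra.
Qed.

Lemma pi_lt : pi < 16%:R / 5%:R :> R.
Proof.
set c : R := 8%:R / 5%:R.
have c0 : 0 < c by rewrite /c divr_gt0 // ltr0n.
have hc : cos c < 0.
  have c2 : c ^+ 2 = 64%:R / 25%:R by rewrite /c; field.
  have c4 : c ^+ 4 = (64%:R / 25%:R) ^+ 2 by rewrite -c2 -exprM.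
  have h1 : c ^+ 2 < 42%:R by rewrite c2; lra.
  have := @cos_ub4 c c0 h1; rewrite c4 c2 expr2; lra.
rewrite ltNge; apply/negP => hp.
have : 0 <= cos c.
  apply: cos_ge0_pihalf; apply/andP; split.
    by apply: (le_trans _ (ltW c0)); rewrite oppr_le0 divr_ge0 // pi_ge0.
  rewrite /c; lra.
lra.
Qed.
End PiBound.

Ltac absr := repeat match goal with
 | |- context [ `|?e| ] => let H := fresh "Habs" in
      (have [H|H] := lerP 0 e; [rewrite (ger0_norm H) | rewrite (ltr0_norm H)])
 | H0 : context [ `|?e| ] |- _ => let H := fresh "Habs" in
      (have [H|H] := lerP 0 e; [rewrite (ger0_norm H) in H0 | rewrite (ltr0_norm H) in H0])
 end.

Section Geo.
Context {R : realType}.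
Definition gam (r t : R) : R * R :=
  if t <= 2 * r then (t - r, - r) else
  if t <= 4 * r then (r, t - 3 * r) else
  if t <= 6 * r then (5 * r - t, r) else (- r, 7 * r - t).

Lemma l1_le (A B D : R) : A + B <= D -> A - B <= D -> -A + B <= D -> -A - B <= D ->
  `|A| + `|B| <= D.
Proof.
move=> h1 h2 h3 h4.
have [HA|HA] := lerP 0 A; [rewrite (ger0_norm HA)|rewrite (ltr0_norm HA)];
have [HB|HB] := lerP 0 B; [rewrite (ger0_norm HB)|rewrite (ltr0_norm HB)| rewrite (ger0_norm HB)|rewrite (ltr0_norm HB)]; lra.
Qed.

Lemma l1_le_abs (A B C : R) :
  (0 <= C -> [/\ A + B <= C, A - B <= C, -A + B <= C & -A - B <= C]) ->
  (C < 0 -> [/\ A + B <= -C, A - B <= -C, -A + B <= -C & -A - B <= -C]) ->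
  `|A| + `|B| <= `|C|.
Proof.
move=> h1 h2; have [HC|HC] := lerP 0 C.
  by rewrite (ger0_norm HC); case: (h1 HC) => *; apply: l1_le.
by rewrite (ltr0_norm HC); case: (h2 HC) => *; apply: l1_le.
Qed.

Lemma gam_l1 (r s t : R) (x : R * R) : 0 < r -> 0 <= t <= 8 * r ->
  - r <= x.1 <= r -> - r <= x.2 <= r ->
  ((x.2 = - r /\ s = x.1 + r) \/ (x.1 = r /\ s = 3 * r + x.2) \/
   (x.2 = r /\ s = 5 * r - x.1) \/ (x.1 = - r /\ s = 7 * r - x.2)) ->
  `|x.1 - (gam r t).1| + `|x.2 - (gam r t).2| <= `|s - t|.
Proof.
move=> r0 /andP[t0 t8] /andP[a1 b1] /andP[a2 b2] hs; rewrite /gam.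
case: ifP => T1; last case: ifP => T2; last case: ifP => T3; rewrite /=;
  move: T1; try move: T2; try move: T3;
  case: hs => [[E1 ->]|[[E1 ->]|[[E1 ->]|[E1 ->]]]]; rewrite ?E1;
  move=> *; apply: l1_le_abs => ?; split; lra.
Qed.
End Geo.

Section Top.
Context {R : realType}.
Lemma nbhs_box (x : R * R) e1 e2 : 0 < e1 -> 0 < e2 ->
  nbhs x [set y | `|x.1 - y.1| < e1 /\ `|x.2 - y.2| < e2].
Proof.
move=> h1 h2; exists (ball x.1 e1, ball x.2 e2) => /=.
  by split; apply: nbhsx_ballx.
by move=> [y1 y2] /= [b1 b2]; move: b1 b2; rewrite -!ball_normE /=.
Qed.

Lemma bdry_sq (r : R) (x : R * R) : bdry (square r) x ->
  [/\ `|x.1| <= r, `|x.2| <= r & ~ (`|x.1| < r /\ `|x.2| < r)].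
Proof.
case=> hc hi.
have hn1 : `|x.1| <= r.
  rewrite leNgt; apply/negP => h.
  have e : 0 < `|x.1| - r by lra.
  have [y [[y1 y2] [b1 _]]] := hc _ (@nbhs_box x _ _ e ltr01).
  have := lerB_dist x.1 y.1. move: b1 => /=. lra.
have hn2 : `|x.2| <= r.
  rewrite leNgt; apply/negP => h.
  have e : 0 < `|x.2| - r by lra.
  have [y [[y1 y2] [_ b1]]] := hc _ (@nbhs_box x _ _ ltr01 e).
  have := lerB_dist x.2 y.2. move: b1 => /=. lra.
split => // -[h1 h2]; apply: hi.
have e1 : 0 < r - `|x.1| by lra.
have e2 : 0 < r - `|x.2| by lra.
apply: filterS (@nbhs_box x _ _ e1 e2) => y [b1 b2]; split.
  have := lerB_dist y.1 x.1; rewrite distrC; lra.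
have := lerB_dist y.2 x.2; rewrite distrC; lra.
Qed.
End Top.

Section Meas.
Context {R : realType}.
Definition sw (k : nat) : R :=
  (match k with 0 => 48 | 1 | 2 => 45 | 3 | 4 => 41 | _ => 24 end)%:R / 100%:R.
Definition slo (k : nat) : R :=
  (match k with 0 => - 19%:R | 1 => 19%:R | 2 => - 31%:R | 3 => 31%:R | 4 => - 41%:R
   | 5 => 41%:R | _ => - 47%:R end) / 100%:R.
Definition shi (k : nat) : R :=
  (match k with 0 => 19%:R | 1 => 31%:R | 2 => - 19%:R | 3 => 41%:R | 4 => - 31%:R
   | 5 => 47%:R | _ => - 41%:R end) / 100%:R.

Definition slab (c : R * R) (a : R) (k : nat) : set (R * R) :=
  [set` Interval (BLeft (c.1 - a * sw k)) (BRight (c.1 + a * sw k))] `*`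
  [set` Interval (BLeft (c.2 + a * slo k)) (BLeft (c.2 + a * shi k))].

Definition stair (c : R * R) (a : R) : set (R * R) :=
  \big[setU/set0]_(k < 7) slab c a k.

Lemma slab_meas c a k : borel2 (slab c a k).
Proof.
rewrite /borel2 /slab; apply: measurableX; exact: measurable_itv.
Qed.

Lemma stair_meas c a : borel2 (stair c a).
Proof.
rewrite /borel2 /stair; apply: bigsetU_measurable => k _; exact: slab_meas.
Qed.

Lemma sw_gt0 k : 0 < sw k :> R.
Proof. by rewrite /sw; case: k => [|[|[|[|[|]]]]] *; rewrite divr_gt0 ?ltr0n. Qed.

Lemma slo_lt k : (k < 7)%N -> slo k < shi k :> R.
Proof.
rewrite /slo /shi => k7; rewrite ltr_pM2r ?invr_gt0 ?ltr0n //.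
by move: k7; case: k => [|[|[|[|[|[|[|]]]]]]] //= _; lra.
Qed.

Lemma slab_leb c a k : 0 < a -> (k < 7)%N ->
  leb2 (slab c a k) = ((2 * a * sw k) * (a * (shi k - slo k)))%:E.
Proof.
move=> a0 k7; rewrite /leb2 /slab product_measure1E; try exact: measurable_itv.
have h1 := @lebesgue_measure_itv R (Interval (BLeft (c.1 - a * sw k)) (BRight (c.1 + a * sw k))).
have h2 := @lebesgue_measure_itv R (Interval (BLeft (c.2 + a * slo k)) (BLeft (c.2 + a * shi k))).
rewrite /= in h1 h2.
rewrite (_ : (_ * _)%E = (lebesgue_measure `[(c.1 - a * sw k)%R, (c.1 + a * sw k)%R] *
  lebesgue_measure `[(c.2 + a * slo k)%R, (c.2 + a * shi k)%R[)%E) //.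
rewrite h1 h2 !lte_fin.
have hw := sw_gt0 k; have hs := @slo_lt k k7.

rewrite ifT; last by nra.
rewrite ifT; last by nra.
rewrite -!EFinD -EFinM; congr (_%:E); ring.
Qed.

Lemma slab_disj c a (i j : 'I_7) : 0 < a -> slab c a i `&` slab c a j !=set0 -> i = j.
Proof.
move=> a0 [y [[_ /andP[l1 h1]] [_ /andP[l2 h2]]]].
move: l1 h1 l2 h2; rewrite !bnd_simp /slo /shi.
move=> L1 H1 L2 H2; apply: val_inj; move: L1 H1 L2 H2 => /=.
case: i => [[|[|[|[|[|[|[|]]]]]]] ?] //=; case: j => [[|[|[|[|[|[|[|]]]]]]] ?] //=; 
  move=> *; exfalso; lra.
Qed.

Lemma stair_leb c a : 0 < a ->
  leb2 (stair c a) = (a ^+ 2 * (2006%:R / 2500%:R))%:E.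
Proof.
move=> a0; rewrite /leb2 /stair measure_bigsetU_ord.
- rewrite (eq_bigr (fun k : 'I_7 => ((2*a*sw k)*(a*(shi k - slo k)))%:E)); last first.
    by move=> k _; rewrite -[LHS]/(leb2 _) slab_leb.
  rewrite sumEFin; congr (_%:E).
  rewrite !big_ord_recr big_ord0 /= /sw /slo /shi /=.
  by field.
- by move=> k; exact: slab_meas.
- by move=> i j _ _ h; apply: slab_disj h.
Qed.
Lemma sq_le (p u P : R) : `|p| <= P -> (p - u) ^+ 2 <= (P + `|u|) ^+ 2.
Proof.
move=> hp; move: (hp); rewrite ler_norml => /andP[h1 h2].
have [HU|HU] := lerP 0 u; [rewrite (ger0_norm HU)|rewrite (ltr0_norm HU)].
  have : 0 <= (P - p + 2 * u) * (P + p) by apply: mulr_ge0; lra.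
  nra.
have : 0 <= (P + p - 2 * u) * (P - p) by apply: mulr_ge0; lra.
nra.
Qed.

Lemma stair_in (a w h p q u v : R) : 0 < a -> 0 <= w -> 0 <= h ->
  (w + 1/2) ^+ 2 + h ^+ 2 <= 1 -> w ^+ 2 + (h + 1/2) ^+ 2 <= 1 ->
  `|p| <= a * w -> `|q| <= a * h -> `|u| + `|v| <= a / 2 ->
  (p - u) ^+ 2 + (q - v) ^+ 2 <= a ^+ 2.
Proof.
move=> a0 w0 h0 c1 c2 hp hq huv.
have e1 := @sq_le p u _ hp; have e2 := @sq_le q v _ hq.
apply: (le_trans (lerD e1 e2)).
have U0 := normr_ge0 u; have V0 := normr_ge0 v.
set U := `|u| in huv U0 e1 *; set V := `|v| in huv V0 e2 *.
have e3 : (a * h + V) ^+ 2 <= (a * h + (a / 2 - U)) ^+ 2.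
  rewrite ler_sqr ?nnegrE; try nra; lra.
apply: (le_trans (lerD (lexx _) e3)).
(* convexity *)
have key : (a * w + U) ^+ 2 + (a * h + (a / 2 - U)) ^+ 2 =
  (1 - 2 * U / a) * (a ^+ 2 * (w ^+ 2 + (h + 1/2) ^+ 2)) +
  (2 * U / a) * (a ^+ 2 * ((w + 1/2) ^+ 2 + h ^+ 2)) - 2 * U * (a / 2 - U).
  by field; rewrite gt_eqF.
rewrite key.
have hl : 0 <= 2 * U / a <= 1.
  apply/andP; split; first by rewrite divr_ge0 //; nra.
  rewrite ler_pdivrMr //; lra.
have hx : 0 <= 2 * U * (a / 2 - U) by apply: mulr_ge0; nra.
have a20 : 0 < a ^+ 2 by rewrite exprn_gt0.
set L := 2 * U / a in hl *.
move: hl => /andP[l0 l1].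
have f1 : (1 - L) * (a ^+ 2 * (w ^+ 2 + (h + 1/2) ^+ 2)) <= (1 - L) * a ^+ 2.
  apply: ler_wpM2l; first lra.
  by rewrite -[X in _ <= X]mulr1 ler_wpM2l // ltW.
have f2 : L * (a ^+ 2 * ((w + 1/2) ^+ 2 + h ^+ 2)) <= L * a ^+ 2.
  apply: ler_wpM2l => //.
  by rewrite -[X in _ <= X]mulr1 ler_wpM2l // ltW.
lra.
Qed.

Definition sh (k : nat) : R :=
  (match k with 0 => 19%:R | 1 | 2 => 31%:R | 3 | 4 => 41%:R | _ => 47%:R end) / 100%:R.

Lemma corner k : (k < 7)%N -> 0 <= sh k :> R /\
  (sw k + 1/2) ^+ 2 + sh k ^+ 2 <= 1 /\ sw k ^+ 2 + (sh k + 1/2) ^+ 2 <= 1.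
Proof.
rewrite /sw /sh; case: k => [|[|[|[|[|[|[|]]]]]]] //= _; rewrite !expr2; lra.
Qed.

Lemma band k : (k < 7)%N -> - sh k <= slo k :> R /\ shi k <= sh k.
Proof.
rewrite /sh /slo /shi; case: k => [|[|[|[|[|[|[|]]]]]]] //= _; lra.
Qed.

Lemma stair_near c a (x y : R * R) : 0 < a ->
  `|x.1 - c.1| + `|x.2 - c.2| <= a / 2 -> stair c a y -> Defs.edist x y <= a.
Proof.
move=> a0 hx; rewrite /stair -bigcup_mkord => -[k /= k7 [/andP[l1 h1] /andP[l2 h2]]].
move: l1 h1 l2 h2; rewrite !bnd_simp => l1 h1 l2 h2.
have [sh0 [c1 c2]] := @corner k k7; have [b1 b2] := @band k k7.
have w0 := sw_gt0 k.
have hp : `|y.1 - c.1| <= a * sw k by rewrite ler_norml; apply/andP; split; lra.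
have hq : `|y.2 - c.2| <= a * sh k.
  rewrite ler_norml; apply/andP; split.
    have : a * (- sh k) <= a * slo k by rewrite ler_wpM2l // ltW.
    lra.
  have : a * shi k <= a * sh k by rewrite ler_wpM2l // ltW.
  lra.
have := @stair_in a (sw k) (sh k) _ _ _ _ a0 (ltW w0) sh0 c1 c2 hp hq hx.
have -> : (y.1 - c.1 - (x.1 - c.1)) ^+ 2 + (y.2 - c.2 - (x.2 - c.2)) ^+ 2 =
  (x.1 - y.1) ^+ 2 + (x.2 - y.2) ^+ 2 by ring.
move=> H; rewrite /edist -[X in _ <= X](ger0_norm (ltW a0)) -sqrtr_sqr.
exact: ler_wsqrtr.
Qed.

End Meas.

Section Meas.
Context {R : realType}.
Lemma sw_le1 (k : nat) : sw k <= 1 :> R.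
Proof. case: k => [|[|[|[|[|[|[|k]]]]]]]; rewrite /sw /=; lra. Qed.
Lemma sh_le1 (k : nat) : sh k <= 1 :> R.
Proof. case: k => [|[|[|[|[|[|[|k]]]]]]]; rewrite /sh /=; lra. Qed.

Lemma stair_bnd (c : R * R) (a : R) : 0 < a -> bounded2 (stair c a).
Proof.
move=> a0; exists (`|c.1| + `|c.2| + a).
rewrite /stair -bigcup_mkord => y -[k /= k7 [/andP[l1 h1] /andP[l2 h2]]].
move: l1 h1 l2 h2; rewrite !bnd_simp => l1 h1 l2 h2.
have [sh0 [c1 c2]] := @corner R k k7; have [b1 b2] := @band R k k7.
have w0 := @sw_gt0 R k.
have w1 := sw_le1 k.
have s1 := sh_le1 k.
have e1 : a * sw k <= a by rewrite -[X in _ <= X]mulr1 ler_wpM2l // ltW.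
have e2 : a * sh k <= a by rewrite -[X in _ <= X]mulr1 ler_wpM2l // ltW.
have e3 : a * (- sh k) <= a * slo k by rewrite ler_wpM2l // ltW.
have e4 : a * shi k <= a * sh k by rewrite ler_wpM2l // ltW.
have := normr_ge0 c.1; have := normr_ge0 c.2.
have /andP[n1 n2] : - `|c.1| <= c.1 <= `|c.1| by rewrite -ler_norml.
have /andP[n3 n4] : - `|c.2| <= c.2 <= `|c.2| by rewrite -ler_norml.
split; rewrite ler_norml; apply/andP; split; lra.
Qed.

Lemma piece (L s : R) (n : nat) : 0 < L -> 0 <= s -> s <= n%:R * L -> (0 < n)%N ->
  exists i, (i < n)%N /\ i%:R * L <= s <= i.+1%:R * L.
Proof.
move=> L0 s0; elim: n => [|m IH] // hs _.
have [hm|hm] := lerP s (m%:R * L).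
  case: m IH hs hm => [|m] IH hs hm.
    by exists 0%N; split => //; rewrite mul0r s0 /= mul1r; move: hs; rewrite mul1r.
  by have [i [im hi]] := IH hm isT; exists i; split => //; apply: ltnW.
by exists m; split => //; rewrite (ltW hm).
Qed.
End Meas.


Theorem lemma10 (R : realType) (d : measure_display) (Omega : measurableType d)
  (P : probability Omega R) (V : Omega -> set (R * R)) (r alpha : R) :
  poisson_process P V -> 0 < r -> 0 < alpha ->
  exists A : set Omega,
    [/\ measurable A,
        [set w | ~ sealed alpha (square r) (V w)] `<=` A &
        (P A <= ((Num.ceil (8 * r / alpha))%:~R
                  * expR (- (pi * alpha ^+ 2 / 4)))%:E)%E].
Proof.
move=> [hfin hcnt hind] r0 a0.
set q := 8 * r / alpha.
have q0 : 0 < q by rewrite /q divr_gt0 // mulr_gt0.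
have Nz0 : 0 <= Num.ceil q by rewrite ceil_ge0; lra.
set N := `|Num.ceil q|%N.
have eN : (N%:R : R) = (Num.ceil q)%:~R by rewrite /N -[in RHS](gez0_abs Nz0).
have qN : q <= N%:R by rewrite eN ceil_ge.
have N0r : 0 < (N%:R : R) by lra.
have N0 : (0 < N)%N by rewrite -(ltr0n R).
set L := 8 * r / N%:R.
have L0 : 0 < L by rewrite /L divr_gt0 // mulr_gt0.
have e8 : 8 * r = q * alpha by rewrite /q; field; rewrite gt_eqF.
have La : L <= alpha by rewrite /L ler_pdivrMr //; nra.
have NL : N%:R * L = 8 * r by rewrite /L; field; rewrite gt_eqF.
set cen := fun i : nat => gam r ((i%:R + 1/2) * L).
set F := fun i : nat => [set w | Defs.count (V w) (stair (cen i) alpha) = 0%N].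
have mF : forall i, measurable (F i).
  move=> i; have := (hcnt (stair (cen i) alpha) (stair_meas _ _) (stair_bnd (cen i) alpha a0) 0%N).1.
  by [].
exists (\big[setU/set0]_(i < N) F i); split.
- by apply: bigsetU_measurable => i _; exact: mF.
- move=> w /= hns; apply: contrapT => nA; apply: hns => x hx.
  have [hx1 hx2 hnot] := bdry_sq r x hx.
  have hb1 : - r <= x.1 <= r by rewrite -ler_norml.
  have hb2 : - r <= x.2 <= r by rewrite -ler_norml.
  have H4 : x.2 = - r \/ x.1 = r \/ x.2 = r \/ x.1 = - r.
    have [c1|c1] := ltrP `|x.1| r; have [c2|c2] := ltrP `|x.2| r.
    - by exfalso; apply: hnot.
    - have [s2|s2] := lerP 0 x.2.
        by right; right; left; move: c2 hx2; rewrite ger0_norm //; lra.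
      by left; move: c2 hx2; rewrite ltr0_norm //; lra.
    - have [s1|s1] := lerP 0 x.1.
        by right; left; move: c1 hx1; rewrite ger0_norm //; lra.
      by right; right; right; move: c1 hx1; rewrite ltr0_norm //; lra.
    - have [s1|s1] := lerP 0 x.1.
        by right; left; move: c1 hx1; rewrite ger0_norm //; lra.
      by right; right; right; move: c1 hx1; rewrite ltr0_norm //; lra.
  have [s [hs hside]] : exists s, 0 <= s <= 8 * r /\
    ((x.2 = - r /\ s = x.1 + r) \/ (x.1 = r /\ s = 3 * r + x.2) \/
     (x.2 = r /\ s = 5 * r - x.1) \/ (x.1 = - r /\ s = 7 * r - x.2)).
    case: H4 => [h|[h|[h|h]]].
    - exists (x.1 + r); split; [apply/andP; split; lra | by left].
    - exists (3 * r + x.2); split; [apply/andP; split; lra | by right; left].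
    - exists (5 * r - x.1); split; [apply/andP; split; lra | by right; right; left].
    - exists (7 * r - x.2); split; [apply/andP; split; lra | by right; right; right].
  move: hs => /andP[s0 s8].
  have sN : s <= N%:R * L by rewrite NL.
  have [i [iN /andP[is1 is2]]] := @piece R L s N L0 s0 sN N0.
  set t := (i%:R + 1/2) * L.
  have iN' : (i.+1%:R : R) <= N%:R by rewrite ler_nat.
  have ht : 0 <= t <= 8 * r.
    apply/andP; split.
      rewrite /t; apply: mulr_ge0; last exact: ltW.
      by have := ler0n R i; lra.
    rewrite -NL /t; have : i.+1%:R * L <= N%:R * L by rewrite ler_pM2r.
    rewrite -natr1; nra.
  have hst : `|s - t| <= alpha / 2.
    move: is2; rewrite -natr1 => is2.
    rewrite ler_norml /t; apply/andP; split; nra.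
  have hl1 := @gam_l1 R r s t x r0 ht hb1 hb2 hside.
  have hc : Defs.count (V w) (stair (cen i) alpha) <> 0%N.
    move=> h0; apply: nA; rewrite -bigcup_mkord; exists i => //.
  have [v [Vv Sv]] : V w `&` stair (cen i) alpha !=set0.
    apply/set0P/negP => /eqP h; apply: hc; by rewrite /Defs.count h fset_set0 cardfs0.
  apply: (le_trans (ereal_inf_lbound _)); first by exists v.
  rewrite lee_fin; apply: (stair_near _ _ _ _ a0 _ Sv).
  rewrite /cen -/t; lra.
- have hA : measurable (\big[setU/set0]_(i < N) F i).
    by apply: bigsetU_measurable => i _; exact: mF.
  apply: (le_trans (@content_subadditive _ _ _ P _ F N (fun k _ => mF k) hA (fun _ h => h))).
  have eP : forall k, P (F k) = (expR (- (alpha ^+ 2 * (2006%:R / 2500%:R))))%:E.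
    move=> k; rewrite (hcnt (stair (cen k) alpha) (stair_meas _ _) (stair_bnd (cen k) alpha a0) 0%N).2.
    by rewrite stair_leb //= expr0 mulr1 fact0 divr1.
  rewrite (eq_bigr (fun=> (expR (- (alpha ^+ 2 * (2006%:R / 2500%:R))))%:E)); last by move=> k _; exact: eP.
  rewrite sumEFin sumr_const card_ord lee_fin.
  apply: (@le_trans _ _ ((Num.ceil q)%:~R * expR (- (alpha ^+ 2 * (2006%:R / 2500%:R))))).
    by rewrite -eN (mulr_natl (expR _) N).
  apply: ler_wpM2l; first by rewrite ler0z.
  rewrite ler_expR.
  rewrite lerN2.
  have hpi := @pi_lt R.
  have a2 : 0 < alpha ^+ 2 by rewrite exprn_gt0.
  nra.
Qed.
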